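(* If $C$ and $C'$ are two cycle graphs with the same degree sequence, then there exists a u-switch sequence transforming $C$ into $C'$: 2-switches $\tau_1,\dots,\tau_k$ ($k\ge0$) such that, with $C_0=C$ and $C_i=\tau_i(C_{i-1})$, each $\tau_i$ is a u-switch over $C_{i-1}$ and $C_k=C'$.
   Context: Graphs are finite, simple, undirected, labeled with vertex set $[n]$; the degree sequence of $G$ is $(d_1,\dots,d_n)$ with $d_i$ the degree of vertex $i$ (so two graphs have the same degree sequence iff each vertex has the same degree in both). A unicyclic graph is a connected graph with exactly one cycle. For vertices $a,b,c,d$, $A=\binom{a\ b}{c\ d}$ is interchangeable in $G$ if $ab,cd\in E(G)$, $\{a,b\}\cap\{c,d\}=\varnothing$, $ac,bd\notin E(G)$; the 2-switch $\tau_A$ sends $G$ to $G-ab-cd+ac+bd$ if $A$ is interchangeable and to $G$ otherwise (trivial). A nontrivial 2-switch $\tau$ over a unicyclic $U$ is a u-switch if $\tau(U)$ is unicyclic. *)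

(* Defs.v *)
From mathcomp Require Import all_boot.
Set Implicit Arguments. Unset Strict Implicit. Unset Printing Implicit Defensive.

(* A graph on vertex set [n] = 'I_n is given by its set of ordered adjacent
   pairs: the edge {u,v} is present iff (u,v) \in G (and then (v,u) \in G). *)
Definition graph (n : nat) := {set 'I_n * 'I_n}.

Section Graphs.
Variable n : nat.
Implicit Types (G S : graph n) (u v a b c d : 'I_n).

Definition adj G : rel 'I_n := fun u v => (u, v) \in G.

Definition simple_graph G : Prop :=
  (forall u v, (u, v) \in G -> (v, u) \in G) /\ (forall u, (u, u) \notin G).

Definition deg G v : nat := #|[set u | (v, u) \in G]|.

Definition same_degree_sequence G G' : Prop := forall v, deg G v = deg G' v.

Definition connected G : Prop := forall u v, connect (adj G) u v.

Definition simple_graphb G : bool :=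
  [forall u, forall v, ((u, v) \in G) ==> ((v, u) \in G)] &&
  [forall u, (u, u) \notin G].

Definition is_cycle S : bool :=
  [&& simple_graphb S, S != set0,
      [forall v, (deg S v == 0) || (deg S v == 2)] &
      [forall u, forall v,
         (0 < deg S u) ==> (0 < deg S v) ==> connect (adj S) u v]].

Definition cycles_of G : {set graph n} :=
  [set S : graph n | (S \subset G) && is_cycle S].

Definition unicyclic G : Prop :=
  simple_graph G /\ connected G /\ #|cycles_of G| = 1.

Definition cycle_graph G : Prop :=
  0 < n /\ simple_graph G /\ connected G /\ forall v, deg G v = 2.

(* A = (a b / c d) *)
Definition switch := ('I_n * 'I_n * 'I_n * 'I_n)%type.

Definition interchangeable G (A : switch) : Prop :=
  let: (a, b, c, d) := A in
  [/\ (a, b) \in G, (c, d) \in G,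
      [/\ a != c, a != d, b != c & b != d],
      (a, c) \notin G & (b, d) \notin G].

Definition interchangeableb G (A : switch) : bool :=
  let: (a, b, c, d) := A in
  [&& (a, b) \in G, (c, d) \in G,
      [&& a != c, a != d, b != c & b != d],
      (a, c) \notin G & (b, d) \notin G].

Definition tau (A : switch) G : graph n :=
  let: (a, b, c, d) := A in
  if interchangeableb G A then
    (G :\: [set (a, b); (b, a); (c, d); (d, c)])
      :|: [set (a, c); (c, a); (b, d); (d, b)]
  else G.

Definition u_switch U (A : switch) : Prop :=
  unicyclic U /\ interchangeable U A /\ unicyclic (tau A U).

Fixpoint u_switch_sequence U (s : seq switch) U' : Prop :=
  match s with
  | [::] => U = U'
  | A :: s' => u_switch U A /\ u_switch_sequence (tau A U) s' U'
  end.

End Graphs.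

(* Main.v *)
Require Import Defs.
From mathcomp Require Import all_boot.
From mathcomp Require Import zify.
Set Implicit Arguments. Unset Strict Implicit. Unset Printing Implicit Defensive.
Section PartA.
Variable n : nat.
Implicit Types (G S C : graph n).

Definition N G x : {set 'I_n} := [set y | (x, y) \in G].

Lemma degE G x : deg G x = #|N G x|. Proof. by []. Qed.

Lemma simple_graphbP G : simple_graph G -> simple_graphb G.
Proof.
case=> s l; apply/andP; split; apply/forallP=> u; last exact: l.
by apply/forallP=> v; apply/implyP=> /s.
Qed.

Lemma simple_graphb_sym G u v : simple_graphb G -> (u, v) \in G -> (v, u) \in G.
Proof. by case/andP=> /forallP/(_ u)/forallP/(_ v)/implyP. Qed.

Lemma sub_N_eq G S x : S \subset G -> deg S x = 2 -> deg G x = 2 -> N S x = N G x.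
Proof.
move=> sSG dS dG; apply/eqP; rewrite eqEcard -!degE dS dG leqnn andbT.
by apply/subsetP=> y; rewrite !inE => /(subsetP sSG).
Qed.

Lemma cycle_unicyclic C : cycle_graph C -> unicyclic C.
Proof.
move=> [n0 [sC [cC dC]]]; split=> //; split=> //.
have symC u v : (u, v) \in C -> (v, u) \in C by case: sC => s _; apply: s.
suff -> : cycles_of C = [set C] by rewrite cards1.
apply/setP=> S; rewrite !inE; apply/andP/eqP => [[sSC cyS]|->]; last first.
  split=> //; apply/and4P; split.
  - exact: simple_graphbP.
  - apply/set0Pn; have : 0 < deg C (Ordinal n0) by rewrite dC.
    by rewrite card_gt0 => /set0Pn [y]; rewrite inE => Hy; exists (Ordinal n0, y).
  - by apply/forallP=> v; rewrite dC.
  - by do 2 apply/forallP=> ?; do 2 apply/implyP=> _; apply: cC.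
case/and4P: cyS => sbS /set0Pn [[u0 v0] uv0] /forallP d02 /forallP cS.
have pos2 x : 0 < deg S x -> deg S x = 2.
  by case/orP: (d02 x) => /eqP -> //.
have du0 : deg S u0 = 2.
  apply: pos2; rewrite card_gt0; apply/set0Pn; exists v0; by rewrite inE.
pose D := [pred x | deg S x == 2].
have clD : closed (adj C) D.
  suff H x y : adj C x y -> x \in D -> y \in D.
    move=> x y axy; apply/idP/idP; first exact: H.
    by apply: H; apply: symC.
  move=> axy; rewrite !inE => /eqP dx; apply/eqP; apply: pos2.
  have : y \in N S x by rewrite (sub_N_eq sSC dx (dC x)) inE.
  rewrite inE => /(simple_graphb_sym sbS) yx.
  by rewrite card_gt0; apply/set0Pn; exists x; rewrite inE.
have allD x : deg S x = 2.
  have := closed_connect clD (cC u0 x); rewrite !inE du0 eqxx => /esym/eqP //.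
apply/setP=> [[x y]]; apply/idP/idP => [/(subsetP sSC) //|xy].
have : y \in N C x by rewrite inE.
by rewrite -(sub_N_eq sSC (allD x) (dC x)) inE.
Qed.

End PartA.

Section PartB.
Variable m : nat.
Local Notation n := m.+3.
Definition cadj (u w : nat) : bool :=
  (w == u.+1) || (u == w.+1) || ((u == m.+2) && (w == 0)) || ((w == m.+2) && (u == 0)).
Definition sc p := if p == m.+2 then 0 else p.+1.
Definition pd p := if p == 0 then m.+2 else p.-1.
Lemma cadjE p w : p < n -> w < n -> cadj p w = (w == sc p) || (w == pd p).
Proof. rewrite /sc /pd /cadj; case: ifP; case: ifP; lia. Qed.
Lemma cadj_sym u w : cadj u w = cadj w u.
Proof. rewrite /cadj; lia. Qed.
Lemma sc_lt p : p < n -> sc p < n. Proof. rewrite /sc; case: ifP; lia. Qed.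
Lemma pd_lt p : p < n -> pd p < n. Proof. rewrite /pd; case: ifP; lia. Qed.
Lemma pd_sc p q : p < n -> q < n -> (q == pd p) = (p == sc q).
Proof. rewrite /sc /pd; case: ifP; case: ifP; lia. Qed.
Lemma cadj_sc p : p < n -> cadj p (sc p).
Proof. by move=> pn; rewrite cadjE ?sc_lt // eqxx. Qed.

Section NatRev.
Variables k j : nat.
Hypotheses (k1 : 1 <= k) (kj : k < j) (jn : j <= m.+2) (nk : ~~ ((k == 1) && (j == m.+2))).
Definition rvn q := if (k <= q) && (q <= j) then k + j - q else q.
Definition Rm u w := [|| (u == k.-1) && (w == k), (u == k) && (w == k.-1),
   (u == j) && (w == sc j) | (u == sc j) && (w == j)].
Definition Ad u w := [|| (u == k.-1) && (w == j), (u == j) && (w == k.-1),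
   (u == k) && (w == sc j) | (u == sc j) && (w == k)].
Definition T u w := (~~ Rm u w && cadj u w) || Ad u w.

Lemma rvn_out q : ~~ ((k <= q) && (q <= j)) -> rvn q = q.
Proof. by rewrite /rvn => /negbTE ->. Qed.
Lemma rvn_in q : (k <= q) && (q <= j) -> rvn q = k + j - q.
Proof. by rewrite /rvn => ->. Qed.
Lemma rvnK q : rvn (rvn q) = q.
Proof.
rewrite /rvn; case: (boolP ((k <= q) && (q <= j))) => H; last by rewrite (negbTE H).
have -> : (k <= k + j - q) && (k + j - q <= j) by lia.
lia.
Qed.
Lemma rvn_lt q : q < n -> rvn q < n.
Proof. rewrite /rvn; case: ifP; lia. Qed.
Lemma rvn_scj : rvn (sc j) = sc j.
Proof. apply: rvn_out; rewrite /sc; case: ifP; lia. Qed.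
Lemma rvn_k : rvn k = j. Proof. rewrite rvn_in; lia. Qed.
Lemma rvn_j : rvn j = k. Proof. rewrite rvn_in; lia. Qed.
Lemma rvn_k1 : rvn k.-1 = k.-1. Proof. rewrite rvn_out; lia. Qed.

Lemma Rm_sym u w : Rm u w = Rm w u.
Proof.
by apply/idP/idP => /or4P [] /andP [] /eqP -> /eqP ->; rewrite /Rm !eqxx ?orbT.
Qed.
Lemma Ad_sym u w : Ad u w = Ad w u.
Proof.
by apply/idP/idP => /or4P [] /andP [] /eqP -> /eqP ->; rewrite /Ad !eqxx ?orbT.
Qed.
Lemma T_sym u w : T u w = T w u.
Proof. by rewrite /T Rm_sym Ad_sym cadj_sym. Qed.

Lemma N1 q : q < n -> T (rvn q) (rvn (sc q)).
Proof.
move=> qn; rewrite /T.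
have [q1|] := ltnP q.+1 k.
  have e1 : sc q = q.+1 by rewrite /sc; case: ifP; lia.
  rewrite e1 !rvn_out; try lia.
  rewrite (_ : Rm q q.+1 = false); first by rewrite /cadj eqxx.
  rewrite /Rm /sc; case: ifP; lia.
rewrite leq_eqVlt => /orP [/eqP qk|kq].
  have e1 : q = k.-1 by lia.
  have e2 : sc q = k by rewrite /sc; case: ifP; lia.
  by rewrite e2 e1 rvn_k rvn_k1 /Ad eqxx eqxx orbT.
have [qj|jq] := ltnP q j.
  have e1 : sc q = q.+1 by rewrite /sc; case: ifP; lia.
  rewrite e1 !rvn_in; try lia.
  rewrite (_ : Rm (k + j - q) (k + j - q.+1) = false).
    rewrite /cadj; lia.
  rewrite /Rm /sc; case: ifP; lia.
rewrite leq_eqVlt in jq; case/orP: jq => [/eqP jq|jq].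
  by rewrite -jq rvn_j rvn_scj /Ad !eqxx !orbT.
rewrite rvn_out; last lia.
rewrite rvn_out; last by rewrite /sc; case: ifP; lia.
rewrite cadj_sc // andbT (_ : Rm q (sc q) = false) //.
rewrite /Rm /sc; case: ifP; case: ifP; lia.
Qed.

Lemma N2a u : u < n -> ~~ Rm u (sc u) -> cadj (rvn u) (rvn (sc u)).
Proof.
move=> un nR.
have [q1|] := ltnP u.+1 k.
  have e1 : sc u = u.+1 by rewrite /sc; case: ifP; lia.
  by rewrite e1 !rvn_out; try lia; rewrite /cadj eqxx.
rewrite leq_eqVlt => /orP [/eqP qk|kq].
  have e1 : u = k.-1 by lia.
  have e2 : sc u = k by rewrite /sc; case: ifP; lia.
  by move: nR; rewrite e2 e1 /Rm !eqxx.
have [qj|jq] := ltnP u j.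
  have e1 : sc u = u.+1 by rewrite /sc; case: ifP; lia.
  rewrite e1 !rvn_in; try lia.
  rewrite /cadj; lia.
rewrite leq_eqVlt in jq; case/orP: jq => [/eqP jq|jq].
  by move: nR; rewrite -jq /Rm !eqxx !orbT.
rewrite rvn_out; last lia.
rewrite rvn_out; last by rewrite /sc; case: ifP; lia.
exact: cadj_sc.
Qed.

Lemma N2b u w : Ad u w -> cadj (rvn u) (rvn w).
Proof.
have ck : cadj k.-1 k by rewrite /cadj; lia.
have cj : cadj j (sc j) by apply: cadj_sc; lia.
case/or4P => /andP [] /eqP -> /eqP ->;
  rewrite ?rvn_k ?rvn_j ?rvn_k1 ?rvn_scj //; rewrite cadj_sym //.
Qed.

Lemma N2 u w : u < n -> w < n -> T u w -> cadj (rvn u) (rvn w).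
Proof.
move=> un wn /orP [/andP [nR c]|]; last exact: N2b.
move: c.
rewrite (cadjE un wn); case/orP => [/eqP we|].
  by rewrite we; apply: N2a => //; rewrite -we.
rewrite pd_sc // => /eqP e; rewrite cadj_sym e; apply: N2a => //.
by rewrite -e Rm_sym.
Qed.

Lemma Nmain u w : u < n -> w < n -> cadj (rvn u) (rvn w) = T u w.
Proof.
move=> un wn; apply/idP/idP; last exact: N2.
rewrite cadjE ?rvn_lt // => /orP [] e.
  move/eqP: e => e; by rewrite -(rvnK w) e -{1}(rvnK u); apply: N1; apply: rvn_lt.
move: e; rewrite pd_sc ?rvn_lt // => /eqP e.
by rewrite T_sym -(rvnK u) e -{1}(rvnK w); apply: N1; apply: rvn_lt.
Qed.
End NatRev.

Definition cyc (g : 'I_n -> 'I_n) : graph n := [set p | cadj (g p.1) (g p.2)].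

Lemma cadj_irr u : u < n -> cadj u u = false.
Proof. rewrite /cadj; lia. Qed.
Lemma sc_pd p : p < n -> sc p != pd p.
Proof. rewrite /sc /pd; case: ifP; case: ifP; lia. Qed.

Section Inj.
Variable g : 'I_n -> 'I_n.
Hypothesis gI : injective g.
Definition hn (i : nat) := invF gI (inord i).
Lemma g_hn i : i < n -> val (g (hn i)) = i.
Proof. by move=> ?; rewrite /hn f_invF; apply: inordK. Qed.
Lemma hn_g x : hn (g x) = x.
Proof. by rewrite /hn inord_val invF_f. Qed.
Lemma eq_hn x i : i < n -> (x == hn i) = (val (g x) == i).
Proof. by move=> ?; rewrite -(inj_eq gI) -val_eqE g_hn. Qed.

Lemma cyc_cycle : cycle_graph (cyc g).
Proof.
have symm : symmetric (adj (cyc g)).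
  by move=> x y; rewrite /adj !inE /= cadj_sym.
split=> //; split; first split.
- by move=> u v; rewrite !inE /= cadj_sym.
- by move=> u; rewrite !inE /= cadj_irr.
split.
  have c0 i : i < n -> connect (adj (cyc g)) (hn 0) (hn i).
    elim: i => [_|i IH lt]; first exact: connect0.
    apply: connect_trans (IH (ltnW lt)) (connect1 _).
    by rewrite /adj inE /= !g_hn // ?(ltnW lt) // /cadj eqxx.
  move=> u v; rewrite -(hn_g u) -(hn_g v).
  apply: connect_trans (c0 _ (ltn_ord _)).
  by rewrite (sym_connect_sym symm); apply: c0.
move=> x; set p := val (g x).
have pn : p < n by apply: ltn_ord.
rewrite /deg; have -> : [set u | (x, u) \in cyc g] = [set hn (sc p); hn (pd p)].
  apply/setP=> y; rewrite !inE /= !eq_hn ?sc_lt ?pd_lt // cadjE //.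
by rewrite cards2 eq_hn ?sc_lt ?pd_lt // g_hn ?sc_lt ?pd_lt // sc_pd.
Qed.

Definition rf (i : 'I_n) : 'I_n := inord (if val i == 0 then 0 else n - i).
Lemma rf_val i : val (rf i) = if val i == 0 then 0 else n - i.
Proof. rewrite /rf /= inordK //; case: ifP => //; move: (ltn_ord i); lia. Qed.
Lemma rfK : involutive rf.
Proof.
move=> i; apply: val_inj; rewrite !rf_val; case: i => [[|v] lt] //=.
case: ifP; lia.
Qed.
Lemma rfg_inj : injective (rf \o g).
Proof. by move=> x y /= /(can_inj rfK) /gI. Qed.
Lemma cyc_rf : cyc (rf \o g) = cyc g.
Proof.
apply/setP=> [[x y]]; rewrite !inE /= !rf_val.
case: (g x) (g y) => [u hu] [w hw] /=; rewrite /cadj; case: ifP; case: ifP; lia.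
Qed.

Section Rev.
Variables k j : nat.
Hypotheses (k1 : 1 <= k) (kj : k < j) (jn : j <= m.+2) (nk : ~~ ((k == 1) && (j == m.+2))).
Definition rv (i : 'I_n) : 'I_n := inord (if (k <= i) && (i <= j) then k + j - i else i).
Lemma rv_val i : val (rv i) = if (k <= i) && (i <= j) then k + j - i else i.
Proof. rewrite /rv /= inordK //; case: ifP => //; move: (ltn_ord i); lia. Qed.
Lemma rvK : involutive rv.
Proof.
move=> [i hi]; apply: val_inj; rewrite !rv_val /=.
case: (boolP ((k <= i) && (i <= j))) => H; last by rewrite (negbTE H).
have -> : (k <= k + j - i) && (k + j - i <= j) by lia.
lia.
Qed.
Lemma rvg_inj : injective (rv \o g).
Proof. by move=> x y /= /(can_inj rvK) /gI. Qed.

Definition swA : switch n := (hn k.-1, hn k, hn j, hn (sc j)).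

Lemma sw_inter : interchangeableb (cyc g) swA.
Proof.
have jn' : j < n by lia.
have scn : sc j < n by apply: sc_lt.
rewrite /= !inE /= !eq_hn ?g_hn //; try lia.
rewrite /cadj /sc; case: ifP; lia.
Qed.

Lemma sw_tau : tau swA (cyc g) = cyc (rv \o g).
Proof.
have jn' : j < n by lia.
have scn : sc j < n by apply: sc_lt.
rewrite /tau sw_inter; apply/setP=> [[x y]]; rewrite !inE /= !xpair_eqE !eq_hn //; try lia.
rewrite !rv_val.
case: (g x) (g y) => [u hu] [w hw] /=.
have := Nmain k1 kj jn nk hu hw; rewrite /T /Rm /Ad /rvn => ->.
by rewrite !orbA.
Qed.
End Rev.
End Inj.

Lemma interchangeableP n0 (G : graph n0) A : interchangeableb G A -> interchangeable G A.
Proof.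
by case: A => [[[a b] c] d] /and5P [? ? /and4P [? ? ? ?] ? ?]; split.
Qed.

Lemma u_sw_cyc g g2 A : injective g -> injective g2 ->
  interchangeableb (cyc g) A -> tau A (cyc g) = cyc g2 -> u_switch (cyc g) A.
Proof.
move=> gI g2I iA e; split; first exact/cycle_unicyclic/cyc_cycle.
split; first exact: interchangeableP.
by rewrite e; exact/cycle_unicyclic/cyc_cycle.
Qed.


Lemma sortF (g' : 'I_n -> 'I_n) (g'I : injective g') d : forall k (g : 'I_n -> 'I_n),
  injective g -> n - k = d -> 1 <= k <= n ->
  (forall v, g' v < k -> g v = g' v) ->
  exists s, u_switch_sequence (cyc g) s (cyc g').
Proof.
elim: d => [|d IH] k g gI e kb inv.
  have kn : k = n by lia.
  exists [::] => /=; apply/setP=> [[x y]]; rewrite !inE /= !inv // kn ltn_ord //.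
have kn : k < n by lia.
set v := hn g'I k.
have g'v : val (g' v) = k by exact: (g_hn g'I kn).
have eqv u : val (g' u) = k -> u = v.
  by move=> h; apply: (g'I); apply: val_inj; rewrite h g'v.
have [gvk|gvk] := eqVneq (val (g v)) k.
  apply: (IH k.+1 g gI) => //; first lia.
  move=> u; rewrite ltnS leq_eqVlt => /orP [/eqP /eqv ->|]; last exact: inv.
  by apply: val_inj; rewrite gvk g'v.
set j := val (g v).
have kj : k < j.
  rewrite ltn_neqAle eq_sym gvk /=; rewrite leqNgt; apply/negP => jk.
  have jn : j < n by apply: ltn_ord.
  have := inv (hn g'I j); rewrite g_hn // => /(_ jk) /(congr1 val).
  rewrite g_hn // => /val_inj /gI /(congr1 (fun z => val (g' z))).
  rewrite g_hn // g'v => jk'; move: gvk; rewrite /j -jk' eqxx //.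
have jn : j <= m.+2 by rewrite -ltnS ltn_ord.
have k1 : 0 < k by lia.
have [kjE|nk] := boolP ((k == 1) && (j == m.+2)).
  rewrite -(cyc_rf g).
  apply: (IH k.+1 (rf \o g) (rfg_inj gI)); first lia; first lia.
  move=> u; rewrite ltnS leq_eqVlt => /orP [/eqP /eqv ->|] /=.
    apply: val_inj; rewrite rf_val g'v.
    have gvm : nat_of_ord (g v) = m.+2 by case/andP: kjE => _ /eqP.
    have k1' : k = 1 by case/andP: kjE => /eqP.
    have gvm2 : val (g v) = m.+2 := gvm.
    rewrite gvm2 ?gvm k1' /=; lia.
  move=> u0; have := inv u u0; move/(congr1 val) => hu.
  apply: val_inj; rewrite rf_val hu; move: u0; case/andP: kjE => /eqP -> _.
  by case: (g' u) => [[|t] ht].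

have [s Hs] : exists s, u_switch_sequence (cyc (rv k j \o g)) s (cyc g').
  apply: (IH k.+1 _ (rvg_inj gI k1 kj jn nk)); first lia; first lia.
  move=> u; rewrite ltnS leq_eqVlt => /orP [/eqP /eqv ->|] /=.
    have g'v2 : nat_of_ord (g' v) = k := g'v.
    have jd : nat_of_ord (g v) = j by [].
    apply: val_inj; rewrite (rv_val k1 kj jn nk).
rewrite jd leqnn (ltnW kj) /=; lia.
  move=> u0; have := inv u u0; move/(congr1 val) => hu.
  apply: val_inj; rewrite (rv_val k1 kj jn nk) hu; move: u0.
case: (g' u) => t ht /= tk; rewrite ifF //; lia.
exists (swA gI k j :: s); split => //.
  exact: (u_sw_cyc gI (rvg_inj gI k1 kj jn nk) (sw_inter gI k1 kj jn nk) (sw_tau gI k1 kj jn nk)).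
by rewrite (sw_tau gI k1 kj jn nk).
Qed.
End PartB.

Section Walk.
Variable m : nat.
Local Notation n := m.+3.
Variable C : graph n.
Hypotheses (sC : simple_graph C) (cC : connected C) (dC : forall v, deg C v = 2).

Lemma symC u v : (u, v) \in C -> (v, u) \in C.
Proof. by case: sC => s _; apply: s. Qed.
Lemma loopC u : (u, u) \notin C.
Proof. by case: sC. Qed.

Lemma nb2 x y z w : y \in N C x -> z \in N C x -> y != z -> w \in N C x ->
  (w == y) || (w == z).
Proof.
move=> yN zN yz wN.
have : [set y; z] == N C x.
  rewrite eqEcard -degE dC cards2 yz andbT.
  by apply/subsetP => t; rewrite !inE => /orP [] /eqP ->; [move: yN | move: zN]; rewrite inE.
by move/eqP => E; move: wN; rewrite -E !inE.
Qed.

Definition other (p x : 'I_n) := odflt x [pick y in N C x | y != p].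
Lemma otherP p x : (other p x \in N C x) && (other p x != p).
Proof.
rewrite /other; case: pickP => [y /andP [-> ->] //|none].
have := cardsD1 p (N C x); rewrite -degE dC => E.
have : 0 < #|N C x :\ p|.
  by move: E; case: (p \in N C x); rewrite ?add0n ?add1n; [case=> <- | move=> <-].
rewrite card_gt0 => /set0Pn [y]; rewrite !inE => /andP [yp yN].
by have := none y; rewrite /= inE yN yp.
Qed.

Definition x0 : 'I_n := ord0.
Fixpoint wp (i : nat) : 'I_n * 'I_n :=
  match i with 0 => (x0, other x0 x0)
  | i'.+1 => let p := wp i' in (p.2, other p.1 p.2) end.
Definition w i := (wp i).1.

Lemma W1 i : (w i, w i.+1) \in C.
Proof.
case: i => [|i]; rewrite /w /=.
  by case/andP: (@otherP x0 x0); rewrite inE.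
by case/andP: (@otherP (wp i).1 (wp i).2); rewrite inE.
Qed.
Lemma W2 i : w i.+2 != w i.
Proof. by rewrite /w /=; case/andP: (@otherP (wp i).1 (wp i).2). Qed.
Lemma W3 i : w i.+1 != w i.
Proof. by apply/eqP => e; have := W1 i; rewrite e (negbTE (loopC _)). Qed.
Lemma W1s i : w i \in N C (w i.+1).
Proof. by rewrite inE; apply: symC; apply: W1. Qed.
Lemma W1n i : w i.+1 \in N C (w i).
Proof. by rewrite inE; apply: W1. Qed.

Definition s j := map w (iota 0 j).
Lemma sS j : s j.+1 = rcons (s j) (w j).
Proof. by rewrite /s -[j.+1]addn1 iotaD map_cat /= cats1. Qed.
Lemma nth_s i j : i < j -> nth x0 (s j) i = w i.
Proof. by move=> ij; rewrite (nth_map 0) ?size_iota // nth_iota. Qed.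
Lemma mem_s i j : i < j -> w i \in s j.
Proof. by move=> ij; apply: map_f; rewrite mem_iota. Qed.
Lemma size_s j : size (s j) = j.
Proof. by rewrite size_map size_iota. Qed.

Lemma uniq_s J : (forall j, j < J -> w j \notin s j) -> uniq (s J).
Proof.
elim: J => [//|J IH] H; rewrite sS rcons_uniq H // IH // => j jJ.
by apply: H; apply: ltnW.
Qed.

Lemma exP : exists j, w j \in s j.
Proof.
case: (boolP [exists j : 'I_n.+1, w j \in s j]) => [/existsP [j Pj]|H]; first by exists j.
exfalso.
have u : uniq (s n.+1).
  apply: uniq_s => j jn; apply/negP => Pj; move/negP: H; apply.
  by apply/existsP; exists (Ordinal jn).
have := max_card (mem (s n.+1)); move/card_uniqP: u => ->; rewrite card_ord size_s; lia.
Qed.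

Definition J0 := ex_minn exP.
Lemma J0P : w J0 \in s J0.
Proof. by rewrite /J0; case: ex_minnP. Qed.
Lemma J0min j : w j \in s j -> J0 <= j.
Proof. by rewrite /J0; case: ex_minnP => ? _ H /H. Qed.
Lemma uJ0 : uniq (s J0).
Proof.
apply: uniq_s => j jJ; apply/negP => /J0min; lia.
Qed.
Lemma injw a b : a < J0 -> b < J0 -> w a = w b -> a = b.
Proof.
move=> aJ bJ e.
have ia : index (w a) (s J0) = a by rewrite -(nth_s aJ) index_uniq ?size_s ?uJ0.
have ib : index (w b) (s J0) = b by rewrite -(nth_s bJ) index_uniq ?size_s ?uJ0.
by rewrite -ia e ib.
Qed.

Lemma J0w0 : (2 < J0) /\ w J0 = w 0.
Proof.
have [i] : exists2 i, i < J0 & w J0 = w i.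
  by case/mapP: J0P => i; rewrite mem_iota => /andP [_ iJ] ->; exists i.
case: i => [iJ e|i iJ e].
  split=> //; move: iJ e; case: J0 => [//|[|[|J]]] // _ e.
    by move: (W3 0); rewrite e eqxx.
  by move: (W2 0); rewrite e eqxx.
exfalso.
have J0p : 0 < J0 by lia.
move: iJ e (injw) J0p; case: J0 => [//|J] iJ e inj _.
have [iJe|iJn] := eqVneq i.+1 J.
  by move: (W3 J); rewrite e iJe eqxx.
have iJ' : i.+1 < J by lia.
have hJ : w J \in N C (w i.+1) by rewrite -e W1s.
have ne : w i != w i.+2 by rewrite eq_sym W2.
case/orP: (nb2 (W1s i) (W1n i.+1) ne hJ) => /eqP E.
  by have := inj J i (ltnSn J) ltac:(lia) E; lia.
have Je := inj J i.+2 (ltnSn J) ltac:(lia) E.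
by move: (W2 i.+1); rewrite -e Je eqxx.
Qed.

Lemma J0gt : 2 < J0. Proof. by case: J0w0. Qed.
Lemma wJ0 : w J0 = w 0. Proof. by case: J0w0. Qed.

Lemma nbw i y : 0 < i -> y \in N C (w i) -> (y == w i.-1) || (y == w i.+1).
Proof.
case: i => [//|i] _ yN; apply: nb2 (W1s i) (W1n i.+1) _ yN.
by rewrite eq_sym W2.
Qed.

Lemma wJ1 : w J0.-1 \in N C (w 0).
Proof. have := W1s J0.-1; rewrite prednK ?wJ0 //; have := J0gt; lia. Qed.

Lemma nbw0 y : y \in N C (w 0) -> (y == w 1) || (y == w J0.-1).
Proof.
move=> yN; have := J0gt => J2.
apply: nb2 (W1n 0) wJ1 _ yN.
apply/eqP => E; have := @injw 1 J0.-1 ltac:(lia) ltac:(lia) E; lia.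
Qed.

Lemma cl x y : x \in s J0 -> (x, y) \in C -> y \in s J0.
Proof.
have := J0gt => J2.
case/mapP => i; rewrite mem_iota /= => iJ -> xy.
have yN : y \in N C (w i) by rewrite inE.
clear xy.
case: i iJ yN => [_|i] yN.
  by case/orP: (nbw0 yN) => /eqP ->; apply: mem_s; lia.
move=> iJ; case/orP: (nbw (ltn0Sn i) iJ) => /eqP ->; first by apply: mem_s; lia.
have [lt|ge] := ltnP i.+2 J0; first exact: mem_s.
have -> : i.+2 = J0 by lia.
by rewrite wJ0; apply: mem_s; lia.
Qed.

Lemma all_s v : v \in s J0.
Proof.
have clo : closed (adj C) (mem (s J0)).
  move=> x y axy; apply/idP/idP => [xs|ys]; first exact: cl xs axy.
  exact: cl ys (symC axy).
have := closed_connect clo (cC x0 v); move=> <-.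
change x0 with (w 0); apply: mem_s; have := J0gt; lia.
Qed.

Lemma J0n : J0 = n.
Proof.
have e1 : #|s J0| = J0 by move/card_uniqP: uJ0 => ->; rewrite size_s.
apply/eqP; rewrite eqn_leq; apply/andP; split.
  by rewrite -e1 -[X in _ <= X]card_ord max_card.
rewrite -e1 -[X in X <= _]card_ord; apply: subset_leq_card.
by apply/subsetP => v _; apply: all_s.
Qed.

Lemma all_sn v : v \in s n. Proof. by have := all_s v; rewrite J0n. Qed.
Lemma uniq_sn : uniq (s n). Proof. by have := uJ0; rewrite J0n. Qed.
Lemma wn0 : w n = w 0. Proof. by have := wJ0; rewrite J0n. Qed.

Definition gw (x : 'I_n) : 'I_n := inord (index x (s n)).
Lemma idx_lt x : index x (s n) < n.
Proof. have := all_s x; rewrite -index_mem size_s => H. by rewrite J0n in H. Qed.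
Lemma gw_val x : val (gw x) = index x (s n).
Proof. by rewrite /gw /= inordK // idx_lt. Qed.
Lemma w_gw x : w (gw x) = x.
Proof. by rewrite gw_val -(nth_s (idx_lt x)) nth_index // all_sn. Qed.
Lemma gw_w i : i < n -> val (gw (w i)) = i.
Proof. by move=> i_n; rewrite gw_val -(nth_s i_n) index_uniq ?size_s // uniq_sn. Qed.
Lemma gw_inj : injective gw.
Proof. by move=> x y e; rewrite -(w_gw x) e w_gw. Qed.

Lemma adj_sc t : t < n -> (w t, w (sc m t)) \in C.
Proof.
rewrite /sc; case: ifP => [/eqP -> _|_ _]; last exact: W1.
by rewrite -wn0; apply: W1.
Qed.

Lemma key i t : i < n -> t < n -> ((w i, w t) \in C) = cadj m i t.
Proof.
move=> i_n t_n; have J0e := J0n; have J2 := J0gt; apply/idP/idP => [it|].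
  have yN : w t \in N C (w i) by rewrite inE.
  case: i i_n it yN => [|i] i_n it yN.
    case/orP: (nbw0 yN) => /eqP E.
      by have := @injw t 1 ltac:(lia) ltac:(lia) E; rewrite /cadj => ->.
    have := @injw t J0.-1 ltac:(lia) ltac:(lia) E; rewrite J0n /cadj => ->; lia.
  case/orP: (nbw (ltn0Sn i) yN) => /eqP E.
    by have := @injw t i ltac:(lia) ltac:(lia) E; rewrite /cadj => ->; lia.
  have [lt|ge] := ltnP i.+2 n.
    by have := @injw t i.+2 ltac:(lia) ltac:(lia) E; rewrite /cadj => ->; lia.
  have e2 : i.+2 = J0 by rewrite J0n; lia.
  move: E; rewrite e2 wJ0 => E.
  by have := @injw t 0 ltac:(lia) ltac:(lia) E; rewrite /cadj => ->; lia.
rewrite cadjE // => /orP [/eqP ->|]; first exact: adj_sc.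
rewrite pd_sc // => /eqP ->; apply: symC; exact: adj_sc.
Qed.

Lemma cycle_repr : exists g : 'I_n -> 'I_n, [/\ injective g, C = cyc g & g x0 = x0].
Proof.
exists gw; split; first exact: gw_inj.
  apply/setP => [[x y]]; rewrite inE /=.
  by have := key (ltn_ord (gw x)) (ltn_ord (gw y)); rewrite !w_gw.
by apply: val_inj; rewrite (gw_w (i:=0)).
Qed.
End Walk.

Theorem theorem3p8 (n : nat) (C C' : graph n) :
  cycle_graph C -> cycle_graph C' -> same_degree_sequence C C' ->
  exists s : seq (switch n), u_switch_sequence C s C'.
Proof.
move=> [n0 [sC [cC dC]]] [_ [sC' [cC' dC']]] _.
have n3 : 2 < n.
  pose x : 'I_n := Ordinal n0.
  have : N C x \subset [set~ x].
    apply/subsetP => y; rewrite !inE => xy; apply/eqP => E; move: xy; rewrite E.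
    by case: sC => _ /(_ x) /negbTE ->.
  move/subset_leq_card; rewrite cardsC1 card_ord -degE dC; lia.
move: C C' sC cC dC sC' cC' dC'; case: n n0 n3 => [|[|[|m]]] // _ _ C C' sC cC dC sC' cC' dC'.
have [g [gI -> g0]] := cycle_repr sC cC dC.
have [g' [g'I -> g'0]] := cycle_repr sC' cC' dC'.
apply: (@sortF m g' g'I (m.+2) 1 g gI) => //.
move=> v; rewrite ltnS leqn0 => /eqP v0.
have e : g' v = x0 m by apply: val_inj.
have -> : v = x0 m by apply: g'I; rewrite e g'0.
by rewrite g0 g'0.
Qed.
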